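(* Let $\mathbf{b}=(b_n)_{n\in\mathbb{N}_0}$ be a $D$-sequence with $\frac{b_{n+1}}{b_n}\to\infty$. Then $$(\mathbb{Z},\tau_{\mathbf{b}})^\wedge=\Big\langle\Big\{\tfrac{1}{b_n}+\mathbb{Z}: n\in\mathbb{N}\Big\}\Big\rangle=(\mathbb{Z},\lambda_{\mathbf{b}})^\wedge,$$ where a character $\chi$ of $\mathbb{Z}$ is identified with $\chi(1)\in\mathbb{T}$; that is, a homomorphism $\chi:\mathbb{Z}\to\mathbb{T}$ is $\tau_{\mathbf{b}}$-continuous if and only if it is $\lambda_{\mathbf{b}}$-continuous, if and only if $\chi(1)=\frac{a}{b_n}+\mathbb{Z}$ for some $a\in\mathbb{Z}$, $n\in\mathbb{N}$.
   Context: $\mathbb{T}=\mathbb{R}/\mathbb{Z}$; $\mathbb{T}_m=[-\frac{1}{4m},\frac{1}{4m}]+\mathbb{Z}$. For a topological abelian group $G$, $G^\wedge$ is the group of continuous homomorphisms $G\to\mathbb{T}$. A $D$-sequence is a sequence $\mathbf{b}=(b_n)_{n\in\mathbb{N}_0}$ of natural numbers with $b_0=1$, $b_n\mid b_{n+1}$, $b_n\neq b_{n+1}$. $\lambda_{\mathbf{b}}$ is the group topology on $\mathbb{Z}$ with neighborhood basis $\{b_n\mathbb{Z}\}_{n\in\mathbb{N}_0}$ at $0$. $\tau_{\mathbf{b}}$ is the group topology on $\mathbb{Z}$ with neighborhood basis at $0$ given by $V_{\mathbf{b},m}=\{k\in\mathbb{Z}: \frac{k}{b_n}+\mathbb{Z}\in\mathbb{T}_m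 \text{ for all } n\in\mathbb{N}\}$, $m\in\mathbb{N}$. *)

(* Defs.v *)
From Stdlib Require Import Reals ZArith.
Open Scope R_scope.

(* The circle group T = R/Z: a real x represents the class x + Z. *)
Definition near0_T (eps x : R) : Prop :=
  exists z : Z, Rabs (x - IZR z) < eps.

Definition in_Tm (m : nat) (x : R) : Prop :=
  exists z : Z, Rabs (x - IZR z) <= / (4 * INR m).

Definition D_sequence (b : nat -> nat) : Prop :=
  b 0%nat = 1%nat /\
  (forall n, (0 < b n)%nat) /\
  (forall n, Nat.divide (b n) (b (S n))) /\
  (forall n, b n <> b (S n)).

Definition ratio_to_infty (b : nat -> nat) : Prop :=
  forall M : R, exists N : nat, forall n : nat, (N <= n)%nat ->
    INR (b (S n)) / INR (b n) > M.

(* Basic neighbourhoods of 0 in lambda_b : b_n Z, n in N_0. *)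
Definition lambda_nbhd (b : nat -> nat) (n : nat) (k : Z) : Prop :=
  exists q : Z, k = (Z.of_nat (b n) * q)%Z.

(* Basic neighbourhoods of 0 in tau_b : V_{b,m}, m in N (m >= 1). *)
Definition V_bm (b : nat -> nat) (m : nat) (k : Z) : Prop :=
  forall n : nat, (1 <= n)%nat -> in_Tm m (IZR k / INR (b n)).

Definition chi (theta : R) (k : Z) : R := IZR k * theta.

(* Continuity of chi (at every point k) for the group topology on Z whose
   neighbourhoods of k are the translates k + V, V a basic neighbourhood of 0,
   with the neighbourhood basis of 0 given by a family (nb i)_{i : I}. *)
Definition continuous_wrt {I : Type} (nb : I -> Z -> Prop) (theta : R) : Prop :=
  forall (k : Z) (eps : R), 0 < eps ->
    exists i : I, forall v : Z, nb i v ->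
      near0_T eps (chi theta (k + v) - chi theta k).

Definition lambda_continuous (b : nat -> nat) (theta : R) : Prop :=
  continuous_wrt (lambda_nbhd b) theta.

(* index m of V_{b,m} ranges over N = {1,2,...}: encode m = S j *)
Definition tau_continuous (b : nat -> nat) (theta : R) : Prop :=
  continuous_wrt (fun j : nat => V_bm b (S j)) theta.

(* Main.v *)
Require Import Defs.
From Stdlib Require Import Reals ZArith Lra Lia Classical.
Open Scope R_scope.

Lemma int_small (z : Z) : Rabs (IZR z) < 1 -> z = 0%Z.
Proof.
  intro H. apply Rabs_def2 in H. destruct H as [H1 H2].
  change (-(1)) with (IZR (-1)) in H2.
  apply lt_IZR in H1. apply lt_IZR in H2. lia.
Qed.

Lemma abs_sub_le (x y : R) : Rabs x <= Rabs y + Rabs (x - y).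
Proof.
  replace x with (y + (x - y)) at 1 by ring. apply Rabs_triang.
Qed.

Lemma near_small (y : R) (w : Z) : Rabs y < 3/4 -> Rabs (y - IZR w) < /4 -> Rabs y < /4.
Proof.
  intros H1 H2.
  assert (Rabs (IZR w) < 1).
  { pose proof (abs_sub_le (IZR w) y). rewrite <- Rabs_Ropp in H2.
    replace (- (y - IZR w)) with (IZR w - y) in H2 by ring. lra. }
  apply int_small in H. subst w. rewrite Rminus_0_r in H2. exact H2.
Qed.

Definition rnd (x : R) : Z := (up (x + /2) - 1)%Z.

Lemma rnd_spec (x : R) : Rabs (x - IZR (rnd x)) <= /2.
Proof.
  unfold rnd. destruct (archimed (x + /2)) as [H1 H2].
  rewrite minus_IZR. apply Rabs_le. simpl. lra.
Qed.

Lemma cont_iff {I : Type} (nb : I -> Z -> Prop) (theta : R) :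
  continuous_wrt nb theta <->
  (forall eps, 0 < eps -> exists i, forall v, nb i v -> near0_T eps (IZR v * theta)).
Proof.
  unfold continuous_wrt, chi. split.
  - intros H eps He. destruct (H 0%Z eps He) as [i Hi]. exists i. intros v Hv.
    specialize (Hi v Hv). simpl in Hi. replace (IZR v * theta) with (IZR v * theta - 0 * theta) by ring. exact Hi.
  - intros H k eps He. destruct (H eps He) as [i Hi]. exists i. intros v Hv.
    rewrite plus_IZR. replace ((IZR k + IZR v) * theta - IZR k * theta) with (IZR v * theta) by ring.
    auto.
Qed.

Section B.
Variable b : nat -> nat.
Hypothesis hb : D_sequence b.

Lemma b_pos n : (0 < b n)%nat.
Proof. destruct hb as [_ [H _]]. apply H. Qed.

Lemma b_lt n : (b n < b (S n))%nat.
Proof.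
  destruct hb as [_ [Hp [Hd Hne]]].
  pose proof (Nat.divide_pos_le _ _ (Hp (S n)) (Hd n)). specialize (Hne n). lia.
Qed.

Lemma b_ge n : (S n <= b n)%nat.
Proof.
  induction n. pose proof (b_pos 0). lia. pose proof (b_lt n). lia.
Qed.

Lemma b_mono N M : (N <= M)%nat -> (b N <= b M)%nat.
Proof.
  induction 1. lia. pose proof (b_lt m). lia.
Qed.

Lemma b_div N M : (N <= M)%nat -> Nat.divide (b N) (b M).
Proof.
  destruct hb as [_ [_ [Hd _]]].
  induction 1. apply Nat.divide_refl. eapply Nat.divide_trans. apply IHle. apply Hd.
Qed.

Lemma INR_b_pos n : 0 < INR (b n).
Proof. apply lt_0_INR. apply b_pos. Qed.

End B.

Definition form (b : nat -> nat) (theta : R) :=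
  exists (a : Z) (n : nat), (1 <= n)%nat /\
       exists z : Z, theta = IZR a / INR (b n) + IZR z.

Lemma int_form b (hb : D_sequence b) theta n w :
  INR (b n) * theta = IZR w -> form b theta.
Proof.
  intro H. pose proof (INR_b_pos b hb n).
  destruct n as [|n].
  - exists 0%Z, 1%nat. split. lia. exists w.
    assert (Hb0 : b 0%nat = 1%nat) by apply hb. rewrite Hb0 in H. simpl in H.
    pose proof (INR_b_pos b hb 1). unfold Rdiv. rewrite Rmult_0_l. lra.
  - exists w, (S n). split. lia. exists 0%Z. rewrite <- H. field. lra.
Qed.

Lemma form_lambda b (hb : D_sequence b) theta : form b theta -> lambda_continuous b theta.
Proof.
  intros [a [n [Hn [z Hz]]]]. unfold lambda_continuous. apply cont_iff.
  intros eps He. exists n. intros v [q Hq]. subst v.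
  exists (q * a + Z.of_nat (b n) * q * z)%Z.
  rewrite Hz. rewrite !plus_IZR, !mult_IZR, <- INR_IZR_INZ.
  pose proof (INR_b_pos b hb n).
  replace (INR (b n) * IZR q * (IZR a / INR (b n) + IZR z) -
   (IZR q * IZR a + INR (b n) * IZR q * IZR z)) with 0 by (field; lra).
  rewrite Rabs_R0. exact He.
Qed.

Lemma INR_abs_nat (v : Z) : INR (Z.abs_nat v) = Rabs (IZR v).
Proof. rewrite INR_IZR_INZ, Zabs2Nat.id_abs, abs_IZR. reflexivity. Qed.

Lemma IZR_le_INR_to_nat (z : Z) : IZR z <= INR (Z.to_nat z).
Proof.
  destruct (Z_le_gt_dec 0 z).
  - rewrite INR_IZR_INZ, Z2Nat.id by lia. lra.
  - pose proof (pos_INR (Z.to_nat z)). assert (IZR z < 0) by (apply IZR_lt; lia). lra.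
Qed.

Lemma form_tau b (hb : D_sequence b) theta : form b theta -> tau_continuous b theta.
Proof.
  intros [a [n [Hn [z Hz]]]]. unfold tau_continuous. apply cont_iff.
  intros eps He.
  set (r := (Rabs (IZR a) + 1) / (4 * eps)).
  exists (Z.to_nat (up r)).
  set (j := Z.to_nat (up r)).
  assert (Hj : INR (S j) > r).
  { rewrite S_INR. pose proof (IZR_le_INR_to_nat (up r)). destruct (archimed r). unfold j. lra. }
  assert (HM : 4 * eps * INR (S j) > Rabs (IZR a) + 1).
  { unfold r in Hj. apply Rmult_gt_compat_l with (r := 4 * eps) in Hj; [|lra].
    replace (4 * eps * ((Rabs (IZR a) + 1) / (4 * eps))) with (Rabs (IZR a) + 1) in Hj by (field; lra).
    lra. }
  pose proof (lt_0_INR (S j) (Nat.lt_0_succ j)) as HSj.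
  intros v Hv. destruct (Hv n Hn) as [w Hw].
  exists (a * w + v * z)%Z.
  pose proof (INR_b_pos b hb n).
  replace (IZR v * theta - IZR (a * w + v * z)) with (IZR a * (IZR v / INR (b n) - IZR w)).
  2:{ rewrite Hz, plus_IZR, !mult_IZR. field. lra. }
  rewrite Rabs_mult.
  apply Rle_lt_trans with (Rabs (IZR a) * / (4 * INR (S j))).
  { apply Rmult_le_compat_l. apply Rabs_pos. exact Hw. }
  apply Rmult_lt_reg_r with (4 * INR (S j)). lra.
  rewrite Rmult_assoc, Rinv_l by lra. pose proof (Rabs_pos (IZR a)). nra.
Qed.

Lemma lambda_form b (hb : D_sequence b) theta : lambda_continuous b theta -> form b theta.
Proof.
  unfold lambda_continuous. rewrite cont_iff. intro H.
  destruct (H (/4) ltac:(lra)) as [n Hn].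
  set (x := INR (b n) * theta).
  set (e := x - IZR (rnd x)).
  assert (He : Rabs e <= /2) by apply rnd_spec.
  assert (Hq : forall q : Z, exists w : Z, Rabs (IZR q * e - IZR w) < /4).
  { intro q. destruct (Hn (Z.of_nat (b n) * q)%Z) as [w Hw]. exists q. reflexivity.
    exists (w - q * rnd x)%Z. rewrite minus_IZR, mult_IZR.
    replace (IZR q * e - (IZR w - IZR q * IZR (rnd x))) with (IZR (Z.of_nat (b n) * q) * theta - IZR w).
    exact Hw. rewrite mult_IZR, <- INR_IZR_INZ. unfold e, x. ring. }
  assert (He1 : Rabs e < /4).
  { destruct (Hq 1%Z) as [w Hw]. rewrite Rmult_1_l in Hw. eapply near_small. lra. exact Hw. }
  assert (Ht : forall t : nat, Rabs (INR t * e) < /4).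
  { induction t. rewrite Rmult_0_l, Rabs_R0. lra.
    destruct (Hq (Z.of_nat (S t))) as [w Hw]. rewrite <- INR_IZR_INZ in Hw.
    eapply near_small; [|exact Hw]. rewrite S_INR.
    replace ((INR t + 1) * e) with (INR t * e + e) by ring.
    pose proof (Rabs_triang (INR t * e) e). lra. }
  assert (e = 0).
  { destruct (Req_dec e 0) as [|Hne]; [assumption|exfalso].
    assert (Hpos : 0 < Rabs e) by (apply Rabs_pos_lt; exact Hne).
    set (r := / (4 * Rabs e)).
    specialize (Ht (Z.to_nat (up r))).
    pose proof (IZR_le_INR_to_nat (up r)). destruct (archimed r).
    rewrite Rabs_mult, Rabs_pos_eq in Ht by apply pos_INR.
    assert (r * Rabs e = /4) by (unfold r; field; lra).
    assert (r * Rabs e <= INR (Z.to_nat (up r)) * Rabs e) by (apply Rmult_le_compat_r; lra).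
    lra. }
  apply (int_form b hb theta n (rnd x)). fold x. unfold e in H0. lra.
Qed.

Lemma step_core b (hb : D_sequence b) (hr : ratio_to_infty b) theta
  (hnot : forall n w, INR (b n) * theta <> IZR w) (M : R) (HM : 1 <= M) (N0 : nat) :
  exists n, (N0 <= n)%nat /\ exists t : Z,
    Rabs (IZR t) * INR (b n) <= / (8 * M) * INR (b (S n)) /\
    exists u z, / (64 * M) <= u <= / 2 /\ IZR t * INR (b n) * theta = u + IZR z.
Proof.
  set (c := / (8 * M)). set (al := / (64 * M)).
  apply NNPP; intro Hc.
  assert (Hc0 : 0 < c) by (unfold c; apply Rinv_0_lt_compat; lra).
  assert (Hal : al = c / 8) by (unfold al, c; field; lra).
  assert (Hal1 : al <= / 64) by (unfold al; apply Rinv_le_contravar; lra).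
  destruct (hr (16 * M)) as [N1 HN1].
  set (e := fun n => INR (b n) * theta - IZR (rnd (INR (b n) * theta))).
  assert (A : forall n, (Nat.max N0 N1 <= n)%nat ->
     Rabs (e n) <= Rabs (e (S n)) /\ INR (b (S n)) / INR (b n) * Rabs (e n) < / 4).
  { intros n Hn. assert (Hn0 : (N0 <= n)%nat) by lia. assert (Hn1 : (N1 <= n)%nat) by lia.
    pose proof (INR_b_pos b hb n) as Hbn. pose proof (INR_b_pos b hb (S n)) as HbSn.
    specialize (HN1 n Hn1).
    assert (HF : c * INR (b (S n)) > 2 * INR (b n)).
    { assert (H' : INR (b (S n)) = INR (b (S n)) / INR (b n) * INR (b n)) by (field; lra).
      assert (H16 : INR (b (S n)) > 16 * M * INR (b n)) by nra.
      unfold c. apply Rlt_gt. apply Rmult_lt_reg_l with (8 * M). lra.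
      replace (8 * M * (/ (8 * M) * INR (b (S n)))) with (INR (b (S n))) by (field; lra). nra. }
    assert (He2 : Rabs (e n) <= /2) by apply rnd_spec.
    assert (G : forall t : Z, Rabs (IZR t) * INR (b n) <= c * INR (b (S n)) ->
               Rabs (IZR t * e n) <= /2 -> Rabs (IZR t * e n) < al).
    { intros t Ht Ht2. apply Rnot_le_lt. intro Hal2. apply Hc. exists n. split; auto.
      destruct (Rle_lt_dec 0 (IZR t * e n)).
      - exists t. split; auto. exists (IZR t * e n), (t * rnd (INR (b n) * theta))%Z. split.
        rewrite Rabs_pos_eq in Hal2, Ht2 by lra; lra. unfold e. rewrite mult_IZR. ring.
      - exists (-t)%Z. split. rewrite opp_IZR, Rabs_Ropp; auto.
        exists (-(IZR t * e n)), (-t * rnd (INR (b n) * theta))%Z. split.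
        rewrite Rabs_left in Hal2, Ht2 by lra; lra. unfold e. rewrite mult_IZR, opp_IZR. ring. }
    assert (Hs : Rabs (e n) < al).
    { specialize (G 1%Z). rewrite Rmult_1_l, Rabs_R1, Rmult_1_l in G. apply G; lra. }
    assert (Hind : forall t : nat, INR t * INR (b n) <= c * INR (b (S n)) -> Rabs (INR t * e n) < al).
    { induction t; intro Ht.
      - rewrite Rmult_0_l, Rabs_R0. lra.
      - rewrite S_INR in Ht. assert (IH : Rabs (INR t * e n) < al) by (apply IHt; lra).
        specialize (G (Z.of_nat (S t))). rewrite <- INR_IZR_INZ, Rabs_pos_eq in G by apply pos_INR.
        apply G. rewrite S_INR; lra.
        rewrite S_INR. replace ((INR t + 1) * e n) with (INR t * e n + e n) by ring.
        pose proof (Rabs_triang (INR t * e n) (e n)). lra. }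
    set (r := c * (INR (b (S n)) / INR (b n))).
    assert (Hr2 : r > 2).
    { unfold r. apply Rmult_gt_reg_l with (INR (b n)). lra.
      replace (INR (b n) * (c * (INR (b (S n)) / INR (b n)))) with (c * INR (b (S n))) by (field; lra). lra. }
    destruct (archimed r) as [Hu1 Hu2].
    assert (Hu3 : (3 <= up r)%Z).
    { assert (IZR 2 < IZR (up r)) by lra. apply lt_IZR in H. lia. }
    set (t0 := Z.to_nat (up r - 1)).
    assert (Ht0 : INR t0 = IZR (up r) - 1).
    { unfold t0. rewrite INR_IZR_INZ, Z2Nat.id by lia. rewrite minus_IZR. reflexivity. }
    assert (Ht0a : INR t0 * INR (b n) <= c * INR (b (S n))).
    { assert (INR t0 <= r) by lra.
      replace (c * INR (b (S n))) with (r * INR (b n)) by (unfold r; field; lra).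
      apply Rmult_le_compat_r; lra. }
    specialize (Hind t0 Ht0a). rewrite Rabs_mult, Rabs_pos_eq in Hind by apply pos_INR.
    assert (Hrat : r * Rabs (e n) < 2 * al).
    { assert (r / 2 <= INR t0) by lra.
      assert (r / 2 * Rabs (e n) <= INR t0 * Rabs (e n)) by (apply Rmult_le_compat_r; [apply Rabs_pos|lra]).
      lra. }
    assert (HA2 : INR (b (S n)) / INR (b n) * Rabs (e n) < /4).
    { unfold r in Hrat. rewrite Hal in Hrat. rewrite Rmult_assoc in Hrat.
      apply Rmult_lt_reg_l with c. lra. lra. }
    assert (Hdiv : Nat.divide (b n) (b (S n))) by apply hb.
    destruct Hdiv as [q Hq].
    assert (HqR : INR (b (S n)) / INR (b n) = INR q) by (rewrite Hq, mult_INR; field; lra).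
    assert (Hq1 : 1 <= INR q).
    { destruct q. pose proof (b_pos b hb (S n)). simpl in Hq. lia.
      rewrite S_INR. pose proof (pos_INR q). lra. }
    rewrite HqR in HA2.
    assert (Heq : e (S n) = INR q * e n).
    { set (w := (Z.of_nat q * rnd (INR (b n) * theta) - rnd (INR (b (S n)) * theta))%Z).
      assert (Hw : e (S n) - INR q * e n = IZR w).
      { unfold w, e. rewrite minus_IZR, mult_IZR, <- INR_IZR_INZ. rewrite Hq, mult_INR. ring. }
      assert (Hw1 : Rabs (IZR w) < 1).
      { rewrite <- Hw. assert (HeS : Rabs (e (S n)) <= /2) by apply rnd_spec.
        unfold Rminus. eapply Rle_lt_trans; [apply Rabs_triang|]. rewrite Rabs_Ropp, Rabs_mult.
        rewrite (Rabs_pos_eq (INR q)) by lra. lra. }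
      apply int_small in Hw1. rewrite Hw1 in Hw. simpl in Hw. lra. }
    split.
    + rewrite Heq, Rabs_mult, (Rabs_pos_eq (INR q)) by lra. pose proof (Rabs_pos (e n)). nra.
    + rewrite HqR. exact HA2. }
  set (N2 := Nat.max N0 N1).
  assert (HE : e N2 <> 0).
  { intro H0. apply (hnot N2 (rnd (INR (b N2) * theta))). unfold e in H0. lra. }
  set (E := Rabs (e N2)). assert (HE0 : 0 < E) by (apply Rabs_pos_lt; exact HE).
  assert (Hmono : forall k, E <= Rabs (e (N2 + k)%nat)).
  { induction k. rewrite Nat.add_0_r. unfold E; lra.
    rewrite <- plus_n_Sm. pose proof (A (N2 + k)%nat ltac:(unfold N2; lia)). lra. }
  destruct (hr (/ (4 * E))) as [N3 HN3].
  specialize (HN3 (N2 + N3)%nat ltac:(lia)). specialize (Hmono N3).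
  destruct (A (N2 + N3)%nat ltac:(unfold N2; lia)) as [_ HA].
  assert (/ (4 * E) * E = /4) by (field; lra).
  assert (0 < / (4 * E)) by (apply Rinv_0_lt_compat; lra).
  nra.
Qed.

Lemma abs_div_le (X B K : R) : 0 < B -> Rabs X <= K * B -> Rabs (X / B) <= K.
Proof.
  intros HB H. unfold Rdiv. rewrite Rabs_mult, Rabs_inv, (Rabs_pos_eq B) by lra.
  apply Rmult_le_reg_r with B. lra. rewrite Rmult_assoc, Rinv_l, Rmult_1_r by lra. exact H.
Qed.

Lemma tau_form b (hb : D_sequence b) (hr : ratio_to_infty b) theta :
  tau_continuous b theta -> form b theta.
Proof.
  intro Ht. apply NNPP; intro Hf.
  assert (hnot : forall n w, INR (b n) * theta <> IZR w)
    by (intros n w Hw; apply Hf; eapply int_form; eauto).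
  unfold tau_continuous in Ht. rewrite cont_iff in Ht.
  destruct (Ht (/4) ltac:(lra)) as [j Hj].
  set (M := INR (S j)).
  assert (HM : 1 <= M) by (unfold M; rewrite S_INR; pose proof (pos_INR j); lra).
  assert (Inv : forall i : nat, exists v, V_bm b (S j) v /\ exists S0 z,
     IZR v * theta = S0 + IZR z /\
     ((/4 <= S0 <= 3/4) \/ (INR i * / (64 * M) <= S0 < /4))).
  { induction i.
    - exists 0%Z. split.
      + intros N HN. exists 0%Z. unfold Rdiv. rewrite Rmult_0_l, Rminus_0_r, Rabs_R0.
        left. apply Rinv_0_lt_compat. fold M. lra.
      + exists 0, 0%Z. split. simpl. ring. right. simpl. lra.
    - destruct IHi as [v [Hv [S0 [z [Hz Hor]]]]].
      destruct Hor as [Hfin | Hlow].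
      + exists v. split; auto. exists S0, z. split; auto.
      + destruct (step_core b hb hr theta hnot M HM (8 * S j * Z.abs_nat v))
          as [n [Hn [t [Htb [u [z' [Hu Huz]]]]]]].
        exists (v + t * Z.of_nat (b n))%Z. split.
        * intros N HN. destruct (Nat.le_gt_cases N n) as [HNn | HNn].
          -- destruct (Hv N HN) as [w Hw]. destruct (b_div b hb N n HNn) as [d Hd].
             exists (w + t * Z.of_nat d)%Z.
             pose proof (INR_b_pos b hb N).
             replace (IZR (v + t * Z.of_nat (b n)) / INR (b N) - IZR (w + t * Z.of_nat d))
               with (IZR v / INR (b N) - IZR w). exact Hw.
             rewrite !plus_IZR, !mult_IZR, <- !INR_IZR_INZ, Hd, mult_INR. field. lra.
          -- exists 0%Z. rewrite Rminus_0_r.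
             pose proof (INR_b_pos b hb N) as HbN.
             assert (Hv0 : Rabs (IZR v) <= / (8 * M) * INR (b (S n))).
             { pose proof (b_ge b hb (S n)).
               assert (Hle : INR (8 * S j * Z.abs_nat v) <= INR (b (S n))) by (apply le_INR; lia).
               rewrite !mult_INR, INR_abs_nat in Hle. fold M in Hle.
               replace (INR 8) with 8 in Hle by (simpl; ring).
               replace (Rabs (IZR v)) with (/ (8 * M) * (8 * M * Rabs (IZR v))) by (field; lra).
               apply Rmult_le_compat_l. left. apply Rinv_0_lt_compat. lra. lra. }
             assert (Hmn : INR (b (S n)) <= INR (b N)) by (apply le_INR; apply b_mono; auto).
             apply abs_div_le. exact HbN.
             rewrite plus_IZR, mult_IZR, <- INR_IZR_INZ.
             eapply Rle_trans. apply Rabs_triang. rewrite Rabs_mult, (Rabs_pos_eq (INR (b n))) by apply pos_INR.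
             fold M.
             assert (/ (4 * M) = 2 * / (8 * M)) by (field; lra).
             assert (0 < / (8 * M)) by (apply Rinv_0_lt_compat; lra).
             nra.
        * exists (S0 + u), (z + z')%Z. split.
          -- rewrite plus_IZR, mult_IZR, <- INR_IZR_INZ, plus_IZR.
             rewrite Rmult_plus_distr_r, Hz, Huz. ring.
          -- rewrite S_INR. destruct (Rlt_le_dec (S0 + u) (/4)); [right|left]; nra. }
  destruct (Inv (16 * S j)%nat) as [v [Hv [S0 [z [Hz Hor]]]]].
  assert (H16 : INR (16 * S j) * / (64 * M) = /4).
  { rewrite mult_INR. fold M. replace (INR 16) with 16 by (simpl; ring). field. lra. }
  destruct Hor as [Hfin | Hlow]; [|lra].
  destruct (Hj v Hv) as [w Hw]. rewrite Hz in Hw.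
  replace (S0 + IZR z - IZR w) with (S0 + IZR (z - w)) in Hw by (rewrite minus_IZR; ring).
  destruct (Z_le_gt_dec 0 (z - w)).
  - apply IZR_le in l. pose proof (Rle_abs (S0 + IZR (z - w))). lra.
  - assert (IZR (z - w) <= IZR (-1)) by (apply IZR_le; lia).
    pose proof (Rle_abs (- (S0 + IZR (z - w)))). rewrite Rabs_Ropp in H0. simpl in H. lra.
Qed.

Theorem theorem4p4 (b : nat -> nat) (hb : D_sequence b) (hr : ratio_to_infty b)
  (theta : R) :
  (tau_continuous b theta <-> lambda_continuous b theta) /\
  (lambda_continuous b theta <->
     exists (a : Z) (n : nat), (1 <= n)%nat /\
       exists z : Z, theta = IZR a / INR (b n) + IZR z).
Proof.
  split; [split|split].
  - intro H. apply form_lambda; auto. apply tau_form; auto.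
  - intro H. apply form_tau; auto. apply lambda_form; auto.
  - intro H. apply lambda_form; auto.
  - intro H. apply form_lambda; auto.
Qed.
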